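(* Let $p$ be an odd prime and let $g$, $g'$ both be of the form \[F(x)+G\!\left(\tfrac1x\right)+H\!\left(\tfrac1{x-1}\right)+\sum_{j=4}^{r+1}J_j\!\left(\tfrac{1}{x-\theta_j}\right)\] described below, with the same pole orders, where $d_1>d_2>d_3$ and $\{d_1,d_2,d_3\}\cap\{d_4,\dots,d_{r+1}\}=\emptyset$. If $(M,\lambda,h)$ transforms $C_g$ into $C_{g'}$, then $M(x)=x$ and $h$ is a constant in $\mathbb{F}_p$; i.e., up to composition with $(x,y)\mapsto(x,y+c)$, $c\in\mathbb{F}_p$, every isomorphism preserving this form is $(x,y)\mapsto(x,\lambda y)$ for some $\lambda\in\mathbb{F}_p^\times$ (and then $g'=g/\lambda$ up to the relabeling of the $\theta_j$).
   Context: Form: $F(x)=\sum_{i=1}^{d_1}a_ix^i$, $G(x)=\sum_{i=1}^{d_2}b_ix^i$, $H(x)=\sum_{i=1}^{d_3}c_ix^i$, $J_j(x)=\sum_{i=1}^{d_j}e_{ij}x^i$ with all $d_i$ not divisible by $p$, $a_i=b_i=c_i=e_{ij}=0$ whenever $p\mid i$, $a_{d_1},b_{d_2},c_{d_3},e_{d_jj}\ne0$, and $\theta_4,\dots,\theta_{r+1}\in\overline{\mathbb{F}}_p\setminus\{0,1\}$ distinct. For $f\in\overline{\mathbb{F}}_p(x)$, $C_f$ is the curve $y^p-y=f(x)$. For a Möbius transformation $M(x)=\frac{\alpha x+\beta}{\gamma x+\delta}$ ($\alpha\delta-\beta\gamma\ne0$), $\lambda\in\mathbb{F}_p^\times$,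 $h\in\overline{\mathbb{F}}_p(x)$, we say $(M,\lambda,h)$ transforms $C_f$ into $C_{f'}$ if $f(M(x))=\lambda f'(x)+h(x)^p-h(x)$. *)

(* Defs.v *)
From HB Require Import structures.
From mathcomp Require Import all_boot all_order all_algebra.
Set Implicit Arguments. Unset Strict Implicit. Unset Printing Implicit Defensive.
Import Order.TTheory GRing.Theory.
Local Open Scope ring_scope.

Definition ratfun (K : fieldType) := {fraction {poly K}}.

Definition rpoly (K : fieldType) (P : {poly K}) : ratfun K := tofrac P.
Definition rcst (K : fieldType) (c : K) : ratfun K := rpoly c%:P.
Definition rX (K : fieldType) : ratfun K := rpoly 'X.

Definition peval (K : fieldType) (P : {poly K}) (m : ratfun K) : ratfun K :=
  \sum_(i < size P) rcst P`_i * m ^+ i.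

(* "P = sum_{i=1}^{d} c_i x^i with p not dividing d, c_d <> 0, and c_i = 0
   whenever p | i" (the condition at i = 0 gives the vanishing constant term). *)
Definition good_part (K : fieldType) (p d : nat) (P : {poly K}) : Prop :=
  [/\ size P = d.+1, ~~ (p %| d)%N & forall i : nat, (p %| i)%N -> P`_i = 0].

(* The extra points are indexed by j : 'I_n  (n = r - 2, j <-> j+4). *)
Definition gform (K : fieldType) (n : nat) (F G H : {poly K})
    (J : 'I_n -> {poly K}) (theta : 'I_n -> K) (m : ratfun K) : ratfun K :=
  peval F m + peval G m^-1 + peval H (m - 1)^-1
  + \sum_(j < n) peval (J j) (m - rcst (theta j))^-1.

(* g is of the form in the paper, with pole orders d1 (at infinity), d2 (at 0),
   d3 (at 1), d j (at theta j). *)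
Definition is_form (K : fieldType) (p n : nat) (d1 d2 d3 : nat) (d : 'I_n -> nat)
    (F G H : {poly K}) (J : 'I_n -> {poly K}) (theta : 'I_n -> K) : Prop :=
  [/\ good_part p d1 F, good_part p d2 G, good_part p d3 H,
      forall j, good_part p (d j) (J j)
    & (forall j, theta j != 0 /\ theta j != 1) /\ injective theta].

Definition moebius (K : fieldType) (alpha beta gamma delta : K) : ratfun K :=
  (rcst alpha * rX K + rcst beta) / (rcst gamma * rX K + rcst delta).

(* Main.v *)
Require Import Defs.
From HB Require Import structures.
From mathcomp Require Import all_boot all_order all_algebra.
From mathcomp Require Import fraction zify ring lra.
Import Order.TTheory GRing.Theory Num.Theory.
Local Open Scope ring_scope.
Open Scope quotient_scope.


Section Val.
Context {K : fieldType}.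
Local Notation RF := (ratfun K).

Definition wz (z : option K) (P : {poly K}) : int :=
  match z with Some a => (mup a P)%:Z | None => - ((size P).-1)%:Z end.

Lemma wzM z P Q : P != 0 -> Q != 0 -> wz z (P * Q) = wz z P + wz z Q.
Proof.
move=> P0 Q0; case: z => [a|] /=; first by rewrite mupM.
rewrite size_mul //.
have := size_poly_gt0 P; have := size_poly_gt0 Q; rewrite P0 Q0 => hq hp.
move: (size P) (size Q) hp hq => m k hm hk.
have -> : (m + k).-1.-1 = (m.-1 + k.-1)%N by lia.
by rewrite PoszD opprD.
Qed.

Lemma wzD z P Q (k : int) : P != 0 -> Q != 0 -> P + Q != 0 ->
  k <= wz z P -> k <= wz z Q -> k <= wz z (P + Q).
Proof.
move=> P0 Q0 PQ0; case: z => [a|] /=.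
  case: k => [k|k] hP hQ; last by [].
  move: hP hQ; rewrite !lez_nat !mup_geq // => hP hQ.
  exact: dvdp_add.
have := size_add P Q; have := size_poly_gt0 (P + Q); rewrite PQ0.
have := size_poly_gt0 P; have := size_poly_gt0 Q; rewrite P0 Q0.
move: (size P) (size Q) (size (P + Q)) => m k' l hk hm hl hs.
rewrite leq_max in hs.
move=> h1 h2; lia.
Qed.

Lemma wzC z c : c != 0 -> wz z c%:P = 0.
Proof.
move=> c0; case: z => [a|] /=; last by rewrite size_polyC c0.
by rewrite mupNroot // rootC.
Qed.


Lemma frac_repr0 (f : RF) :
  exists PQ : {poly K} * {poly K}, PQ.2 != 0 /\ f = rpoly PQ.1 / rpoly PQ.2.
Proof.
rewrite /ratfun in f *; elim/quotW: f => x.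
exists (\n_x, \d_x); split; first exact: denom_ratioP.
rewrite /rpoly /=.
unlock tofrac.
set A := (X in X / _). set B := (X in _ / X).
have -> : A / B = \pi_{fraction {poly K}} (FracField.mulf (Ratio \n_x 1) (FracField.invf (Ratio \d_x 1))).
  by rewrite FracField.pi_mul FracField.pi_inv.
apply/eqmodP; rewrite /= FracField.equivfE /FracField.mulf /FracField.invf /=.
have dx := denom_ratioP x.
by rewrite !numden_Ratio ?oner_neq0 ?mul1r ?mulr1 ?dx // mulrC.
Qed.

Lemma frac_repr (f : RF) :
  exists PQ : {poly K} * {poly K}, (PQ.2 != 0) && (f == rpoly PQ.1 / rpoly PQ.2).
Proof. by have [PQ [h1 h2]] := frac_repr0 f; exists PQ; rewrite h1 h2 eqxx. Qed.

Definition rep (f : RF) : {poly K} * {poly K} := xchoose (frac_repr f).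

Lemma repP f : (rep f).2 != 0 /\ f = rpoly (rep f).1 / rpoly (rep f).2.
Proof. by have /andP[h1 /eqP h2] := xchooseP (frac_repr f). Qed.
Definition nu z (f : RF) : int := locked (wz z (rep f).1 - wz z (rep f).2).

Lemma rpoly_eq0 (P : {poly K}) : (rpoly P == 0) = (P == 0).
Proof. exact: tofrac_eq0. Qed.

Lemma rpolyM (P Q : {poly K}) : rpoly (P * Q) = rpoly P * rpoly Q.
Proof. exact: tofracM. Qed.
Lemma rpolyD (P Q : {poly K}) : rpoly (P + Q) = rpoly P + rpoly Q.
Proof. exact: tofracD. Qed.
Lemma rpolyB (P Q : {poly K}) : rpoly (P - Q) = rpoly P - rpoly Q.
Proof. exact: tofracB. Qed.
Lemma rpoly1 : rpoly 1 = 1 :> RF.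
Proof. exact: tofrac1. Qed.
Lemma rpoly0 : rpoly 0 = 0 :> RF.
Proof. exact: tofrac0. Qed.
Lemma rpolyX (P : {poly K}) n : rpoly (P ^+ n) = rpoly P ^+ n.
Proof. exact: tofracXn. Qed.

Lemma frac_eq (P Q P' Q' : {poly K}) : Q != 0 -> Q' != 0 ->
  (rpoly P / rpoly Q == rpoly P' / rpoly Q') = (P * Q' == P' * Q).
Proof.
move=> Q0 Q'0; rewrite eqr_div ?rpoly_eq0 // -!rpolyM.
exact: tofrac_eq.
Qed.

Lemma nu_frac z P Q : P != 0 -> Q != 0 -> nu z (rpoly P / rpoly Q) = wz z P - wz z Q.
Proof.
move=> P0 Q0; rewrite /nu -lock; set f := rpoly P / rpoly Q.
have [Q'0 e] := repP f.
move: (rep f) Q'0 e => [P' Q'] /= Q'0 e.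
move/eqP: e; rewrite /f frac_eq // => /eqP e.
have P'0 : P' != 0.
  apply/eqP => P'z; move: e; rewrite P'z mul0r; apply/eqP; rewrite mulf_neq0 //.
have := @wzM z P Q' P0 Q'0; have := @wzM z P' Q P'0 Q0; rewrite e => ->.
move=> h; apply/eqP; rewrite subr_eq; apply/eqP.
lia.
Qed.

Lemma frac_of (f : RF) : f != 0 ->
  exists P Q, [/\ P != 0, Q != 0 & f = rpoly P / rpoly Q].
Proof.
have [Q0 e] := repP f.
move: (rep f) Q0 e => [P Q] /= Q0 e.
move=> f0; exists P, Q; split => //.
by apply/eqP => P0; move: f0; rewrite e P0 rpoly0 mul0r eqxx.
Qed.

Lemma nu_rpoly z P : P != 0 -> nu z (rpoly P) = wz z P.
Proof.
move=> P0; have -> : rpoly P = rpoly P / rpoly 1 by rewrite rpoly1 divr1.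
rewrite nu_frac ?oner_neq0 //.
have -> : wz z 1 = 0 by rewrite -polyC1 wzC ?oner_neq0.
by rewrite subr0.
Qed.

Lemma nuM z f g : f != 0 -> g != 0 -> nu z (f * g) = nu z f + nu z g.
Proof.
move=> /frac_of[P [Q [P0 Q0 ->]]] /frac_of[P' [Q' [P'0 Q'0 ->]]].
rewrite mulf_div -!rpolyM !nu_frac ?mulf_neq0 // !wzM //; lia.
Qed.

Arguments nuM z {f g}.

Lemma nuV z f : f != 0 -> nu z f^-1 = - nu z f.
Proof.
move=> /frac_of[P [Q [P0 Q0 ->]]].
rewrite invf_div !nu_frac //; lia.
Qed.

Lemma rpoly_neq0 {P : {poly K}} : P != 0 -> rpoly P != 0.
Proof. by rewrite rpoly_eq0. Qed.

Lemma nuD z f g (k : int) : f != 0 -> g != 0 -> f + g != 0 ->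
  k <= nu z f -> k <= nu z g -> k <= nu z (f + g).
Proof.
move=> /frac_of[P [Q [P0 Q0 ->]]] /frac_of[P' [Q' [P'0 Q'0 ->]]].
rewrite (addf_div _ _ (rpoly_neq0 Q0) (rpoly_neq0 Q'0)) -!rpolyM -rpolyD => hs.
have hn : P * Q' + P' * Q != 0.
  by apply/eqP => e; move: hs; rewrite e rpoly0 mul0r eqxx.
have QQ : Q * Q' != 0 by rewrite mulf_neq0.
rewrite !nu_frac // => h1 h2.
have : k + wz z (Q * Q') <= wz z (P * Q' + P' * Q).
  apply: wzD; rewrite ?mulf_neq0 // !wzM //.
all: try (move: h1 h2; clear; lia).

clear hs; rewrite !wzM //.

set w := wz z (P * Q' + P' * Q); move=> hh; move: hh; clear; lia.
Qed.

Lemma nu_rcst z {c} : c != 0 -> nu z (rcst c) = 0.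
Proof. by move=> c0; rewrite /rcst nu_rpoly ?polyC_eq0 // wzC. Qed.

Lemma rcstM (a b : K) : rcst (a * b) = rcst a * rcst b.
Proof. by rewrite /rcst polyCM rpolyM. Qed.
Lemma rcstD (a b : K) : rcst (a + b) = rcst a + rcst b.
Proof. by rewrite /rcst polyCD rpolyD. Qed.
Lemma rcstN (a : K) : rcst (- a) = - rcst a.
Proof. by rewrite /rcst polyCN /rpoly tofracN. Qed.
Lemma rcstB (a b : K) : rcst (a - b) = rcst a - rcst b.
Proof. by rewrite rcstD rcstN. Qed.
Lemma rcst1 : rcst 1 = 1 :> RF.
Proof. by rewrite /rcst rpoly1. Qed.
Lemma rcst0 : rcst 0 = 0 :> RF.
Proof. by rewrite /rcst rpoly0. Qed.
Lemma rcst_eq0 (c : K) : (rcst c == 0) = (c == 0).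
Proof. by rewrite /rcst rpoly_eq0 polyC_eq0. Qed.
Lemma rcst_neq0 {c : K} : c != 0 -> rcst c != 0.
Proof. by rewrite rcst_eq0. Qed.
Lemma rcstX (a : K) n : rcst (a ^+ n) = rcst a ^+ n.
Proof. by elim: n => [|n IH]; rewrite ?expr0 ?rcst1 // !exprS rcstM IH. Qed.

Lemma nuN z f : nu z (- f) = nu z f.
Proof.
have [->|f0] := eqVneq f 0; first by rewrite oppr0.
have m1 : (-1 : K) != 0 by rewrite oppr_eq0 oner_neq0.
rewrite -mulN1r -rcst1 -rcstN (nuM z (rcst_neq0 m1) f0) (nu_rcst z m1).
by rewrite add0r.
Qed.

Lemma nuX z f n : f != 0 -> nu z (f ^+ n) = nu z f *+ n.
Proof.
move=> f0; elim: n => [|n IH].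
  by rewrite expr0 -rcst1 (nu_rcst z (oner_neq0 K)).
by rewrite exprS (nuM z f0 (expf_neq0 n f0)) IH mulrS.
Qed.

End Val.
Arguments nuM {K} z {f g}.

Section Val2.
Context {K : fieldType}.
Local Notation RF := (ratfun K).
Lemma nu_lt z (f g : RF) : f != 0 -> (g = 0 \/ nu z (f : RF) < nu z g) ->
  f + g != 0 /\ nu z (f + g) = nu z f.
Proof.
move=> f0 [->|hlt]; first by rewrite addr0.
have [->|g0] := eqVneq g 0; first by rewrite addr0.
have fg0 : f + g != 0.
  apply/eqP => e; move: hlt; have -> : g = - f by rewrite -(addKr f g) e addr0.
  by rewrite nuN ltxx.
split; first exact: fg0.
have h1 : nu z f <= nu z (f + g) by apply: nuD; [exact: f0|exact: g0|exact: fg0|exact: lexx|exact: ltW].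
have h2 : Num.min (nu z (f + g)) (nu z g) <= nu z ((f + g) + - g).
  apply: nuD.
  - exact: fg0.
  - rewrite oppr_eq0; exact: g0.
  - rewrite addrK; exact: f0.
  - lia.
  - rewrite nuN; lia.
move: h2; rewrite addrK => h2.
move: h1 h2 hlt; set a := nu z f; set b := nu z g; set c := nu z (f + g).
clear; lia.
Qed.

Arguments nu_lt {z f g}.

Definition vge z (k : int) (f : RF) := f = 0 \/ k <= nu z f.

Lemma vge0 z k : vge z k 0.
Proof. by left. Qed.

Lemma vge_le z k k' (f : RF) : k' <= k -> vge z k (f : RF) -> vge z k' f.
Proof. move=> h [->|h']; [by left | right; lia]. Qed.

Lemma vgeD z k (f g : RF) : vge z k (f : RF) -> vge z k g -> vge z k (f + g).
Proof.
move=> [->|hf]; first by rewrite add0r.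
move=> [->|hg]; first by rewrite addr0; right.
have [f0|f0] := eqVneq f 0; first by rewrite f0 add0r; right.
have [g0|g0] := eqVneq g 0; first by rewrite g0 addr0; right.
have [fg|fg] := eqVneq (f + g) 0; first by left.
right; exact: (@nuD _ z f g k f0 g0 fg hf hg).
Qed.

Lemma vgeN z k (f : RF) : vge z k (f : RF) -> vge z k (- f).
Proof. by move=> [->|h]; [left; rewrite oppr0 | right; rewrite nuN]. Qed.

Lemma vgeM z a b (f g : RF) : vge z a f -> vge z b g -> vge z (a + b) (f * g).
Proof.
move=> [->|hf]; first by left; rewrite mul0r.
move=> [->|hg]; first by left; rewrite mulr0.
have [f0|f0] := eqVneq f 0; first by left; rewrite f0 mul0r.
have [g0|g0] := eqVneq g 0; first by left; rewrite g0 mulr0.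
by right; rewrite (nuM z f0 g0); lia.
Qed.

Lemma vge_rcst z c : vge z 0 (rcst c).
Proof.
have [->|c0] := eqVneq c 0; first by left; rewrite rcst0.
by right; rewrite (nu_rcst z c0).
Qed.

Lemma vgeX z k (f : RF) n : vge z k (f : RF) -> vge z (k *+ n) (f ^+ n).
Proof.
move=> h; elim: n => [|n IH]; first by rewrite expr0 mulr0n -rcst1; apply: vge_rcst.
by rewrite exprS mulrS; apply: vgeM.
Qed.

Lemma vge_sum z k n (T : 'I_n -> RF) : (forall i, vge z k (T i)) ->
  vge z k (\sum_(i < n) T i).
Proof.
move=> h; apply: (big_ind (vge z k)); [exact: vge0 | exact: vgeD | by move=> i _].
Qed.

Definition po z (f : RF) : int := locked (if f == 0 then 0 else Num.max 0 (- nu z f)).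

Lemma po_ge0 z (f : RF) : 0 <= po z f.
Proof. by rewrite /po -lock; case: (f == 0) => //; lia. Qed.

Lemma po_nat z (f : RF) : exists m : nat, po z (f : RF) = m.
Proof.
have := po_ge0 z f; case: (po z f) => [m|m] // _; by exists m.
Qed.

Lemma po0f z : po z 0 = 0.
Proof. by rewrite /po -lock eqxx. Qed.

Lemma poE z (f : RF) : f != 0 -> po z (f : RF) = Num.max 0 (- nu z f).
Proof. by rewrite /po -lock => /negbTE ->. Qed.

Arguments poE z {f}.

Lemma po_leP z (f : RF) (m : int) : 0 <= m -> (po z (f : RF) <= m <-> vge z (- m) f).
Proof.
move=> m0; have [->|f0] := eqVneq f 0; first by rewrite po0f; split => // _; left.
rewrite poE //; split.
  by move=> h; right; lia.
by case=> [e|h]; [move: f0; rewrite e eqxx | lia].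
Qed.

Lemma po0P z (f : RF) : po z (f : RF) = 0 <-> vge z 0 f.
Proof.
rewrite -oppr0 -po_leP //; have := po_ge0 z f; split; lia.
Qed.

Lemma po_pos z (f : RF) : 0 < po z (f : RF) -> f != 0 /\ nu z (f : RF) = - po z f.
Proof.
have [->|f0] := eqVneq f 0; first by rewrite po0f.
by rewrite poE // => h; split => //; lia.
Qed.

Arguments po_pos {z f}.

Lemma po_nu z (f : RF) (m : int) : f != 0 -> nu z (f : RF) = - m -> 0 <= m -> po z (f : RF) = m.
Proof. by move=> f0 e m0; rewrite poE // e; lia. Qed.

Lemma po_addle z (f g : RF) : po z (f + g) <= Num.max (po z f) (po z g).
Proof.
have h0 : 0 <= Num.max (po z f) (po z g) by have := po_ge0 z f; lia.
apply/po_leP => //; apply: vgeD; apply/po_leP => //; lia.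
Qed.

Lemma po_opp z (f : RF) : po z (- f) = po z f.
Proof.
have [->|f0] := eqVneq f 0; first by rewrite oppr0.
have nf : - f != 0 by rewrite oppr_eq0; exact: f0.
by rewrite (poE z nf) (poE z f0) nuN.
Qed.

Lemma po_addlt z (f g : RF) : po z g < po z (f : RF) -> po z (f + g) = po z f.
Proof.
move=> hlt; have hf : 0 < po z f by have := po_ge0 z g; lia.
have [f0 ef] := po_pos hf.
have hg : g = 0 \/ nu z f < nu z g.
  have [->|g0] := eqVneq g 0; first by left.
  by right; move: hlt; rewrite ef (poE z g0); lia.
have [fg0 e] := nu_lt f0 hg.
apply: po_nu; [exact: fg0 | by rewrite e ef | exact: po_ge0].
Qed.

Lemma po_add0 z (f g : RF) : po z g = 0 -> po z (f + g) = po z f.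
Proof.
move=> hg; have [h|h] : 0 < po z f \/ po z f = 0 by have := po_ge0 z f; lia.
  by apply: po_addlt; rewrite hg.
rewrite h; have := po_addle z f g; have := po_ge0 z (f + g); rewrite h hg; lia.
Qed.

Lemma po_sum0 z n (T : 'I_n -> RF) : (forall i, po z (T i) = 0) ->
  po z (\sum_(i < n) T i) = 0.
Proof. by move=> h; apply/po0P; apply: vge_sum => i; apply/po0P. Qed.

Lemma po_scal z c (f : RF) : c != 0 -> po z (rcst c * f) = po z f.
Proof.
move=> c0; have [->|f0] := eqVneq f 0; first by rewrite mulr0.
have cf : rcst c * f != 0 by apply: mulf_neq0; [exact: (rcst_neq0 c0)| exact: f0].
by rewrite (poE z cf) (poE z f0) (nuM z (rcst_neq0 c0) f0) (nu_rcst z c0) add0r.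
Qed.

Lemma po_AS z (p : nat) (h : RF) : (1 < p)%N -> po z (h ^+ p - h) = p%:Z * po z h.
Proof.
move=> p1; have [h0|hpos] : po z h = 0 \/ 0 < po z h by have := po_ge0 z h; lia.
  rewrite h0 mulr0; apply/po0P; apply: vgeD; last by apply: vgeN; apply/po0P.
  by have := vgeX z 0 h p (proj1 (po0P z h) h0); rewrite mul0rn.
have [hn0 eh] := po_pos hpos.
have hpn : h ^+ p != 0 by apply: expf_neq0; exact: hn0.
rewrite po_addlt; last first.
  rewrite po_opp (poE z hpn) (nuX z h p hn0) eh -mulr_natl.
  rewrite mulrN opprK natz; move: hpos p1; generalize (po z h) => m; clear; nia.
apply: po_nu; [exact: hpn | | by have := po_ge0 z h; lia].
rewrite (nuX z h p hn0) eh -mulr_natl.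
set m := po z h; clear; lia.
Qed.

End Val2.

Arguments vge_le {K z k k' f}.
Section Val3.
Context {K : fieldType}.
Local Notation RF := (ratfun K).

Lemma peval_widen (P : {poly K}) (m : RF) k :
  peval P m = \sum_(i < size P + k) rcst P`_i * m ^+ i.
Proof.
elim: k => [|k IH]; first by rewrite addn0.
rewrite addnS big_ord_recr /= -IH nth_default ?leq_addr //.
by rewrite rcst0 mul0r addr0.
Qed.

Lemma peval_widen' (P : {poly K}) (m : RF) n : (size P <= n)%N ->
  peval P m = \sum_(i < n) rcst P`_i * m ^+ i.
Proof. by move=> h; rewrite (peval_widen P m (n - size P)) subnKC. Qed.

Arguments peval_widen' P m {n}.

Lemma peval0 (m : RF) : peval 0 m = 0.
Proof. by rewrite /peval size_poly0 big_ord0. Qed.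

Lemma pevalD (P Q : {poly K}) (m : RF) : peval (P + Q) m = peval P m + peval Q m.
Proof.
set n := (size P + size Q)%N.
have hP : (size P <= n)%N by rewrite leq_addr.
have hQ : (size Q <= n)%N by rewrite leq_addl.
have hPQ : (size (P + Q)%R <= n)%N.
  by apply: leq_trans (size_polyD _ _) _; rewrite geq_max hP hQ.
rewrite (peval_widen' P m hP) (peval_widen' Q m hQ) (peval_widen' (P + Q) m hPQ) -big_split /=.
by apply: eq_bigr => i _; rewrite coefD rcstD mulrDl.
Qed.

Lemma pevalC (c : K) (P : {poly K}) (m : RF) : peval (c%:P * P) m = rcst c * peval P m.
Proof.
set n := (size P + size (c%:P * P)%R)%N.
have hP : (size P <= n)%N by rewrite leq_addr.
have hQ : (size (c%:P * P)%R <= n)%N by rewrite leq_addl.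
rewrite (peval_widen' P m hP) (peval_widen' _ m hQ) mulr_sumr.
by apply: eq_bigr => i _; rewrite coefCM rcstM mulrA.
Qed.

Lemma peval_rX (P : {poly K}) : peval P (rX K) = rpoly P.
Proof.
rewrite -{2}(coefK P) poly_def /rpoly rmorph_sum /=.
apply: eq_bigr => i _; rewrite -mul_polyC tofracM tofracXn.
by [].
Qed.

Lemma peval_reg z (P : {poly K}) (N : RF) : vge z 0 N -> vge z 0 (peval P N).
Proof.
move=> hN; apply: vge_sum => i.
rewrite -[0 : int]add0r; apply: vgeM; first exact: vge_rcst.
by have := vgeX z 0 N i hN; rewrite mul0rn.
Qed.

Lemma peval_vge1 z (P : {poly K}) (N : RF) : vge z 1 N -> P`_0 = 0 ->
  vge z 1 (peval P N).
Proof.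
move=> hN hP0; apply: vge_sum => i.
case: i => [[|i] hi] /=.
  by rewrite hP0 rcst0 mul0r; apply: vge0.
rewrite -[1 : int]add0r; apply: vgeM; first exact: vge_rcst.
apply: (vge_le _ (vgeX z 1 N i.+1 hN)).
rewrite -mulr_natl natz; lia.
Qed.

Lemma psum_le z (c : nat -> K) (N : RF) n : N != 0 -> nu z N = -1 ->
  po z (\sum_(i < n) rcst (c i) * N ^+ i) <= n.-1.
Proof.
move=> N0 hN; apply/po_leP; first by lia.
apply: vge_sum => -[i hi] /=.
rewrite -[- _]add0r; apply: vgeM; first exact: vge_rcst.
apply: (vge_le (k := -1 *+ i)); first by rewrite -mulr_natl natz; lia.
by apply: vgeX; right; rewrite hN.
Qed.

Lemma psum_eq z (c : nat -> K) (N : RF) k : N != 0 -> nu z N = -1 ->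
  c k != 0 -> po z (\sum_(i < k.+1) rcst (c i) * N ^+ i) = k.
Proof.
move=> N0 hN ck; rewrite big_ord_recr /=.
case: k ck => [|k] ck.
  rewrite big_ord0 add0r expr0 mulr1; apply/po0P; exact: vge_rcst.
have hNk : N ^+ k.+1 != 0 by apply: expf_neq0; exact: N0.
have e1 : po z (rcst (c k.+1) * N ^+ k.+1) = k.+1.
  rewrite po_scal //; apply: po_nu; [exact: hNk | | by []].
  by rewrite (nuX z N k.+1 N0) hN -mulr_natl natz; lia.
rewrite addrC po_addlt e1 //.
have := psum_le z c N k.+1 N0 hN; simpl => h.
apply: (le_lt_trans h); by rewrite ltz_nat.
Qed.

Lemma peval_pole z (P : {poly K}) (N : RF) : N != 0 -> nu z N = -1 ->
  po z (peval P N) = (size P).-1.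
Proof.
move=> N0 hN; rewrite /peval.
have [->|P0] := eqVneq P 0; first by rewrite size_poly0 big_ord0 po0f.
have hs : size P = (size P).-1.+1 by rewrite prednK // size_poly_gt0.
rewrite hs; apply: (psum_eq z (fun i => P`_i) N _ N0 hN).
by rewrite -lead_coefE lead_coef_eq0.
Qed.

End Val3.

Section Val4.
Context {K : fieldType}.
Local Notation RF := (ratfun K).

Definition pgood (p : nat) (P : {poly K}) := forall i, (p %| i)%N -> P`_i = 0.
Definition okp (p : nat) (e : int) := forall m : nat, e = (p * m)%N :> int -> m = 0%N.

Lemma okp_size p P : (0 < p)%N -> pgood p P -> okp p ((size P).-1).
Proof.
move=> p0 hP m [] e; apply/eqP; apply: contraT => m0.
have pm : (0 < p * m)%N by rewrite muln_gt0 p0 lt0n.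
have P0 : P != 0 by apply/eqP => P0; move: pm; rewrite -e P0 size_poly0.
have := hP (p * m)%N (dvdn_mulr _ (dvdnn p)).
rewrite -e -lead_coefE => /eqP; rewrite lead_coef_eq0 => /eqP P0'.
by move: P0; rewrite P0' eqxx.
Qed.

Lemma rXsub_eq (t : K) : rX K - rcst t = rpoly ('X - t%:P).
Proof. by rewrite /rX /rcst rpolyB. Qed.

Lemma rXsub_neq0 (t : K) : rX K - rcst t != 0.
Proof. by rewrite rXsub_eq rpoly_eq0 polyXsubC_eq0. Qed.

Lemma nu_rXsub_fin (a t : K) : nu (Some a) (rX K - rcst t) = (if t == a then 1 else 0).
Proof.
rewrite rXsub_eq nu_rpoly ?polyXsubC_eq0 //= -(expr1 ('X - t%:P)) mup_XsubCX.
by case: (t == a).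
Qed.

Lemma nu_rXsub_inf (t : K) : nu None (rX K - rcst t) = -1.
Proof. by rewrite rXsub_eq nu_rpoly ?polyXsubC_eq0 //= size_XsubC. Qed.

Lemma rX_sub0 : rX K = rX K - rcst 0.
Proof. by rewrite rcst0 subr0. Qed.

Lemma vge_rpoly_fin (a : K) (P : {poly K}) : vge (Some a) 0 (rpoly P).
Proof.
have [->|P0] := eqVneq P 0; first by left; rewrite rpoly0.
by right; rewrite nu_rpoly.
Qed.

Definition Nz (z : option K) : RF :=
  match z with Some a => (rX K - rcst a)^-1 | None => rX K end.

Lemma Nz_neq0 z : Nz z != 0.
Proof.
case: z => [a|] /=; first by rewrite invr_eq0; exact: rXsub_neq0.
by rewrite rX_sub0; exact: rXsub_neq0.
Qed.

Lemma nu_Nz z : nu z (Nz z) = -1.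
Proof.
case: z => [a|] /=.
  by rewrite nuV ?rXsub_neq0 // nu_rXsub_fin eqxx.
by rewrite rX_sub0 nu_rXsub_inf.
Qed.

Lemma po_FrX_inf (P : {poly K}) : po None (peval P (rX K)) = (size P).-1.
Proof.
apply: peval_pole; first by rewrite rX_sub0; exact: rXsub_neq0.
by rewrite rX_sub0 nu_rXsub_inf.
Qed.

Lemma po_FrX_fin a (P : {poly K}) : po (Some a) (peval P (rX K)) = 0.
Proof. by apply/po0P; rewrite peval_rX; apply: vge_rpoly_fin. Qed.

Lemma po_inv_inf (P : {poly K}) t : po None (peval P (rX K - rcst t)^-1) = 0.
Proof.
apply/po0P; apply: peval_reg; right.
by rewrite nuV ?rXsub_neq0 // nu_rXsub_inf.
Qed.

Lemma po_inv_fin a (P : {poly K}) t :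
  po (Some a) (peval P (rX K - rcst t)^-1) = if t == a then (size P).-1 else 0.
Proof.
have [e|ne] := eqVneq t a.
  rewrite e; apply: peval_pole; first by rewrite invr_eq0; exact: rXsub_neq0.
  by rewrite nuV ?rXsub_neq0 // nu_rXsub_fin eqxx.
apply/po0P; apply: peval_reg; right.
by rewrite nuV ?rXsub_neq0 // nu_rXsub_fin (negbTE ne).
Qed.

Lemma pgoodD p (P Q : {poly K}) : pgood p P -> pgood p Q -> pgood p (P + Q).
Proof. by move=> hP hQ i hi; rewrite coefD hP ?hQ ?addr0. Qed.

Lemma pgoodC p c (P : {poly K}) : pgood p P -> pgood p (c%:P * P).
Proof. by move=> hP i hi; rewrite coefCM hP ?mulr0. Qed.

Lemma pgood0 p : pgood p (0 : {poly K}).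
Proof. by move=> i _; rewrite coef0. Qed.

Definition Scl p z (f : RF) :=
  exists P R, [/\ pgood p P, po z R = 0 & f = peval P (Nz z) + R].

Lemma S_po0 p z (f : RF) : po z f = 0 -> Scl p z f.
Proof. by move=> h; exists 0, f; split; rewrite ?peval0 ?add0r //; apply: pgood0. Qed.

Lemma S_add p z (f g : RF) : Scl p z f -> Scl p z g -> Scl p z (f + g).
Proof.
move=> [P [R [hP hR ->]]] [P' [R' [hP' hR' ->]]].
exists (P + P'), (R + R'); split; first exact: pgoodD.
  by rewrite po_add0 // hR.
by rewrite pevalD; rewrite addrACA.
Qed.

Lemma S_scal p z c (f : RF) : Scl p z f -> Scl p z (rcst c * f).
Proof.
move=> [P [R [hP hR ->]]].
exists (c%:P * P), (rcst c * R); split; first exact: pgoodC.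
  have [->|c0] := eqVneq c 0; first by rewrite rcst0 mul0r po0f.
  by rewrite po_scal.
by rewrite pevalC mulrDr.
Qed.

Lemma S_sum p z n (T : 'I_n -> RF) : (forall i, Scl p z (T i)) -> Scl p z (\sum_(i < n) T i).
Proof.
move=> h; apply: (big_ind (Scl p z)); [by apply: S_po0; rewrite po0f | exact: S_add | by move=> i _].
Qed.

Lemma S_rX p z (P : {poly K}) : pgood p P -> Scl p z (peval P (rX K)).
Proof.
move=> hP; case: z => [a|].
  by apply: S_po0; rewrite po_FrX_fin.
by exists P, 0; split; rewrite ?po0f ?addr0.
Qed.

Lemma S_inv p z (P : {poly K}) t : pgood p P -> Scl p z (peval P (rX K - rcst t)^-1).
Proof.
move=> hP; case: z => [a|]; last by apply: S_po0; rewrite po_inv_inf.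
have [e|ne] := eqVneq t a.
  by exists P, 0; split; rewrite ?po0f ?addr0 //= e.
by apply: S_po0; rewrite po_inv_fin (negbTE ne).
Qed.

Lemma S_okp p z (f : RF) : (0 < p)%N -> Scl p z f -> okp p (po z f).
Proof.
move=> p0 [P [R [hP hR ->]]].
rewrite po_add0 // peval_pole ?Nz_neq0 ?nu_Nz //.
exact: okp_size.
Qed.

Lemma gform_eq n (F G H : {poly K}) (J : 'I_n -> {poly K}) (theta : 'I_n -> K) (m : RF) :
  gform F G H J theta m = peval F m + peval G (m - rcst 0)^-1 + peval H (m - rcst 1)^-1
    + \sum_(j < n) peval (J j) (m - rcst (theta j))^-1.
Proof. by rewrite rcst0 rcst1 subr0. Qed.

Lemma S_gform p z n (F G H : {poly K}) (J : 'I_n -> {poly K}) (theta : 'I_n -> K) :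
  pgood p F -> pgood p G -> pgood p H -> (forall j, pgood p (J j)) ->
  Scl p z (gform F G H J theta (rX K)).
Proof.
move=> hF hG hH hJ; rewrite gform_eq.
apply: S_add; last by apply: S_sum => j; apply: S_inv.
apply: S_add; last exact: S_inv.
apply: S_add; [exact: S_rX | exact: S_inv].
Qed.

Lemma gform_inf n (F G H : {poly K}) (J : 'I_n -> {poly K}) (theta : 'I_n -> K) :
  G`_0 = 0 -> H`_0 = 0 -> (forall j, (J j)`_0 = 0) ->
  exists R, vge None 1 R /\ gform F G H J theta (rX K) = rpoly F + R.
Proof.
move=> hG hH hJ; rewrite gform_eq peval_rX.
have hv t : vge None 1 (rX K - rcst t)^-1.
  by right; rewrite nuV ?rXsub_neq0 // nu_rXsub_inf.
eexists; split; last by rewrite -!addrA.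
apply: vgeD; first exact: peval_vge1.
apply: vgeD; first exact: peval_vge1.
by apply: vge_sum => j; apply: peval_vge1.
Qed.

End Val4.

Arguments nu_lt {K z f g}.
Arguments poE {K} z {f}.
Arguments po_pos {K z f}.
Section Val5.
Context {K : fieldType}.
Local Notation RF := (ratfun K).

Lemma po_inv_pole z (M : RF) (P : {poly K}) t : M != 0 -> nu z M = -1 ->
  po z (peval P (M - rcst t)^-1) = 0.
Proof.
move=> M0 hM; apply/po0P; apply: peval_reg.
have hg : - rcst t = 0 \/ nu z M < nu z (- rcst t).
  have [->|t0] := eqVneq t 0; first by left; rewrite rcst0 oppr0.
  by right; rewrite nuN (nu_rcst z t0) hM.
have [hne e] := nu_lt M0 hg.
by right; rewrite (nuV z _ hne) e hM.
Qed.

Lemma gform_pole z n (F G H : {poly K}) (J : 'I_n -> {poly K}) (theta : 'I_n -> K) (M : RF) :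
  M != 0 -> nu z M = -1 -> po z (gform F G H J theta M) = (size F).-1.
Proof.
move=> M0 hM; rewrite gform_eq.
rewrite po_add0; last by apply: po_sum0 => j; apply: po_inv_pole.
rewrite po_add0; last by apply: po_inv_pole.
rewrite po_add0; last by apply: po_inv_pole.
exact: peval_pole.
Qed.

Lemma po_inv_zero z (M : RF) s t (P : {poly K}) : M - rcst s != 0 -> nu z (M - rcst s) = 1 ->
  po z (peval P (M - rcst t)^-1) = if t == s then (size P).-1 else 0.
Proof.
move=> Ms hs; have [e|ne] := eqVneq t s.
  rewrite e; apply: peval_pole; first by rewrite invr_eq0; exact: Ms.
  by rewrite (nuV z _ Ms) hs.
have st : s - t != 0 by rewrite subr_eq0 eq_sym.
have ee : M - rcst t = rcst (s - t) + (M - rcst s) by rewrite rcstB; ring.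
have hg : M - rcst s = 0 \/ nu z (rcst (s - t)) < nu z (M - rcst s).
  by right; rewrite (nu_rcst z st) hs.
have [hne e] := nu_lt (rcst_neq0 st) hg.
rewrite ee; apply/po0P; apply: peval_reg; right.
by rewrite (nuV z _ hne) e (nu_rcst z st).
Qed.

Arguments po_inv_zero z {M s} t P.

Lemma po_F_zero z (M : RF) s (P : {poly K}) : nu z (M - rcst s) = 1 ->
  po z (peval P M) = 0.
Proof.
move=> hs; apply/po0P; apply: peval_reg.
have -> : M = (M - rcst s) + rcst s by rewrite subrK.
apply: vgeD; last exact: vge_rcst.
by right; rewrite hs.
Qed.

Arguments po_F_zero z {M s} P.

Lemma gform_zero0 z n (F G H : {poly K}) (J : 'I_n -> {poly K}) (theta : 'I_n -> K) (M : RF) :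
  (forall j, theta j != 0) -> M - rcst 0 != 0 -> nu z (M - rcst 0) = 1 ->
  po z (gform F G H J theta M) = (size G).-1.
Proof.
move=> ht M0 hM; rewrite gform_eq.
rewrite po_add0; last first.
  by apply: po_sum0 => j; rewrite (po_inv_zero z _ _ M0 hM) (negbTE (ht j)).
rewrite po_add0; last by rewrite (po_inv_zero z _ _ M0 hM) oner_eq0.
rewrite addrC po_add0; last exact: (po_F_zero z _ hM).
by rewrite (po_inv_zero z _ _ M0 hM) eqxx.
Qed.

Lemma gform_zero1 z n (F G H : {poly K}) (J : 'I_n -> {poly K}) (theta : 'I_n -> K) (M : RF) :
  (forall j, theta j != 1) -> M - rcst 1 != 0 -> nu z (M - rcst 1) = 1 ->
  po z (gform F G H J theta M) = (size H).-1.
Proof.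
move=> ht M0 hM; rewrite gform_eq.
rewrite po_add0; last first.
  by apply: po_sum0 => j; rewrite (po_inv_zero z _ _ M0 hM) (negbTE (ht j)).
rewrite addrC po_add0; last first.
  rewrite po_add0; last by rewrite (po_inv_zero z _ _ M0 hM) eq_sym oner_eq0.
  exact: (po_F_zero z _ hM).
by rewrite (po_inv_zero z _ _ M0 hM) eqxx.
Qed.

Lemma po_gX_inf n (F G H : {poly K}) (J : 'I_n -> {poly K}) (theta : 'I_n -> K) :
  po None (gform F G H J theta (rX K)) = (size F).-1.
Proof.
apply: gform_pole; first by rewrite rX_sub0; exact: rXsub_neq0.
by rewrite rX_sub0 nu_rXsub_inf.
Qed.

Lemma po_gX_fin n (F G H : {poly K}) (J : 'I_n -> {poly K}) (theta : 'I_n -> K) (a : K) :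
  (forall j, theta j != 0 /\ theta j != 1) -> injective theta ->
  let e := po (Some a) (gform F G H J theta (rX K)) in
  e = 0 \/ (a = 0 /\ e = (size G).-1) \/ (a = 1 /\ e = (size H).-1)
  \/ exists j, e = (size (J j)).-1.
Proof.
move=> ht inj e; rewrite /e gform_eq.
have hS : (forall j, theta j != a) ->
    po (Some a) (\sum_(j < n) peval (J j) (rX K - rcst (theta j))^-1) = 0.
  by move=> h; apply: po_sum0 => j; rewrite po_inv_fin (negbTE (h j)).
have [a0|a0] := eqVneq a 0.
  right; left; split => //.
  rewrite po_add0; last by apply: hS => j; rewrite a0; exact: (proj1 (ht j)).
  rewrite po_add0; last by rewrite po_inv_fin a0 oner_eq0.
  by rewrite addrC po_add0 ?po_FrX_fin // po_inv_fin a0 eqxx.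
have [a1|a1] := eqVneq a 1.
  right; right; left; split => //.
  rewrite po_add0; last by apply: hS => j; rewrite a1; exact: (proj2 (ht j)).
  rewrite addrC po_add0; last first.
    by rewrite po_add0 ?po_FrX_fin // po_inv_fin a1 eq_sym oner_eq0.
  by rewrite po_inv_fin a1 eqxx.
rewrite addrC po_add0; last first.
  rewrite po_add0; last by rewrite po_inv_fin eq_sym (negbTE a1).
  rewrite po_add0; last by rewrite po_inv_fin eq_sym (negbTE a0).
  exact: po_FrX_fin.
have [j0 hj0|nj] := pickP (fun j => theta j == a); last first.
  by left; apply: hS => j; rewrite nj.
right; right; right; exists j0.
rewrite (bigD1 j0) //= po_add0.
  by rewrite po_inv_fin hj0.
apply/po0P; apply: (big_ind (vge (Some a) 0)); [exact: vge0 | exact: vgeD | ].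
move=> j hj; apply/po0P; rewrite po_inv_fin.
case: eqP => // e'; move/eqP: hj0; rewrite -e' => /inj ej.
by move: hj; rewrite ej eqxx.
Qed.

End Val5.

Arguments nu_lt {K z f g}.
Arguments poE {K} z {f}.
Arguments po_pos {K z f}.
Arguments frac_of {K f}.

Lemma nopole_const (K : closedFieldType) (h : ratfun K) :
  (forall z, po z h = 0) -> exists c, h = rcst c.
Proof.
move=> hz; have [->|h0] := eqVneq h 0; first by exists 0; rewrite rcst0.
have [P [Q [P0 Q0 eh]]] := frac_of h0.
have [n hn] : exists n, (size Q <= n)%N by exists (size Q).
elim: n P Q P0 Q0 eh hn => [|n IH] P Q P0 Q0 eh hn.
  by move: Q0; rewrite -size_poly_eq0 -leqn0 hn.
have [s1|s2] := leqP (size Q) 1.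
  have hinf := hz None; move/po0P: hinf => [e|hv]; first by move: h0; rewrite e eqxx.
  move: hv; rewrite eh nu_frac //= (size1_polyC s1) size_polyC.
  have q0 : Q`_0 != 0.
    by apply: contra Q0 => /eqP q0; rewrite (size1_polyC s1) q0.
  rewrite q0 /= => hv.
  have sP : (size P <= 1)%N by move: hv; rewrite oppr0 subr0 oppr_ge0 lez_nat leqn0; case: (size P) => [|[|k]].
  exists (P`_0 / Q`_0); apply/eqP.
  set p0 := P`_0; set qq := Q`_0.
  rewrite [in rpoly P](size1_polyC sP) -/p0 -/qq.
  rewrite /rcst -[rpoly (_ / _)%:P]divr1 -rpoly1.
  rewrite frac_eq ?polyC_eq0 ?oner_neq0 //.
  by rewrite mulr1 -polyCM (divfK q0).
have [a ra] : exists a, root Q a.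
  by apply/closed_rootP; rewrite neq_ltn s2 orbT.
have ha := hz (Some a); move/po0P: ha => [e|hv]; first by move: h0; rewrite e eqxx.
move: hv; rewrite eh nu_frac //= => hv.
have mQ : (0 < mup a Q)%N by rewrite -XsubC_dvd // dvdp_XsubCl.
have dP : 'X - a%:P %| P by rewrite XsubC_dvd //; move: hv mQ; clear; lia.
have dQ : 'X - a%:P %| Q by rewrite dvdp_XsubCl.
set L := 'X - a%:P.
have L0 : L != 0 by rewrite polyXsubC_eq0.
have eP := divpK dP; have eQ := divpK dQ.
set P1 := P %/ L in eP; set Q1 := Q %/ L in eQ.
have P10 : P1 != 0 by apply: contra P0 => /eqP e1; rewrite -eP e1 mul0r.
have Q10 : Q1 != 0 by apply: contra Q0 => /eqP e1; rewrite -eQ e1 mul0r.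
rewrite -eh; refine (IH P1 Q1 P10 Q10 _ _).
  rewrite eh; apply/eqP; rewrite frac_eq //.
  by rewrite -eP -eQ; apply/eqP; ring.
move: hn; rewrite -eQ size_mul // size_XsubC; move: (size Q1); clear; lia.
Qed.

Arguments nu_lt {K z f g}.
Arguments poE {K} z {f}.
Arguments po_pos {K z f}.
Arguments frac_of {K f}.

Section Moeb.
Context {K : fieldType}.
Local Notation RF := (ratfun K).

Lemma rcstV (c : K) : c != 0 -> rcst c^-1 = (rcst c)^-1.
Proof.
move=> c0; have u : rcst c != 0 by rewrite rcst_eq0.
apply: (mulfI u); rewrite -rcstM mulfV // mulfV //; exact: rcst1.
Qed.

Lemma moeb_pole (al be ga de : K) : al * de - be * ga != 0 -> ga != 0 ->
  moebius al be ga de != 0 /\ nu (Some (- de / ga)) (moebius al be ga de) = -1.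
Proof.
move=> hdet g0; set z0 := - de / ga.
set num := al%:P * 'X + be%:P.
set den := ga%:P * ('X - z0%:P).
have rnum : num.[z0] != 0.
  have h2 : num.[z0] * ga = - (al * de - be * ga).
    by rewrite /num hornerD hornerCM hornerX hornerC /z0; field.
  apply: contra hdet => /eqP e; move: h2; rewrite e mul0r => /eqP.
  by rewrite eq_sym oppr_eq0.
have num0 : num != 0 by apply: contra rnum => /eqP ->; rewrite horner0.
have den0 : den != 0 by rewrite mulf_neq0 ?polyC_eq0 ?polyXsubC_eq0.
have eM : moebius al be ga de = rpoly num / rpoly den.
  rewrite /moebius /num /den /rX /rcst !rpolyD !rpolyM rpolyB.
  congr (_ / _).
  by rewrite mulrBr -[rpoly ga%:P * rpoly z0%:P]rpolyM -polyCM /z0 mulrCA mulfV // mulr1 polyCN /rpoly tofracN opprK.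
split; first by rewrite eM mulf_neq0 ?invr_eq0 ?rpoly_eq0.
rewrite eM nu_frac //= mupM ?polyC_eq0 ?polyXsubC_eq0 //.
rewrite mupNroot ?rootC // mupNroot; last by rewrite rootC.
by rewrite -(expr1 ('X - z0%:P)) mup_XsubCX eqxx.
Qed.

Lemma moeb_affine (al be de : K) : de != 0 ->
  moebius al be 0 de = rcst (al / de) * rX K + rcst (be / de).
Proof.
move=> d0; rewrite /moebius rcst0 mul0r add0r !rcstM (rcstV _ d0).
by rewrite mulrDl mulrAC.
Qed.

Lemma aff_zero (a b s : K) : a != 0 ->
  let M := rcst a * rX K + rcst b in
  M - rcst s != 0 /\ nu (Some ((s - b) / a)) (M - rcst s) = 1.
Proof.
move=> a0 M.
have e : M - rcst s = rcst a * (rX K - rcst ((s - b) / a)).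
  rewrite /M mulrBr -rcstM mulrCA mulfV // mulr1 rcstB.
  ring.
have ra : rcst a != 0 by rewrite rcst_eq0.
rewrite e; split; first by apply: mulf_neq0; [exact: ra | exact: rXsub_neq0].
by rewrite (nuM _ ra (rXsub_neq0 _)) (nu_rcst _ a0) nu_rXsub_fin eqxx add0r.
Qed.

End Moeb.


Theorem theorem6p6
  (p : nat) (K : closedFieldType)
  (p_prime : prime p) (p_odd : odd p)
  (charK : p \in [pchar K])
  (* K is an algebraic closure of F_p: algebraically closed, and every element
     lies in a finite subfield *)
  (K_alg : forall x : K, exists k : nat, (0 < k)%N /\ x ^+ (p ^ k) = x)
  (n d1 d2 d3 : nat) (d : 'I_n -> nat)
  (hd12 : (d2 < d1)%N) (hd23 : (d3 < d2)%N)
  (hdisj : forall j : 'I_n, [/\ d j != d1, d j != d2 & d j != d3])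
  (F G H : {poly K}) (J : 'I_n -> {poly K}) (theta : 'I_n -> K)
  (F' G' H' : {poly K}) (J' : 'I_n -> {poly K}) (theta' : 'I_n -> K)
  (hg : is_form p d1 d2 d3 d F G H J theta)
  (hg' : is_form p d1 d2 d3 d F' G' H' J' theta')
  (alpha beta gamma delta : K) (hdet : alpha * delta - beta * gamma != 0)
  (lambda : K) (hl0 : lambda != 0) (hlp : lambda ^+ p = lambda)
  (h : ratfun K)
  (htrans : gform F G H J theta (moebius alpha beta gamma delta)
            = rcst lambda * gform F' G' H' J' theta' (rX K) + (h ^+ p - h)) :
  moebius alpha beta gamma delta = rX K /\
  exists c : K, c ^+ p = c /\ h = rcst c.

Proof.
case: hg => [[sF nF pF] [sG nG pG] [sH nH pH] hJ [hth inj]].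
case: hg' => [[sF' nF' pF'] [sG' nG' pG'] [sH' nH' pH'] hJ' [hth' inj']].
have p1 : (1 < p)%N := prime_gt1 p_prime.
have p0 : (0 < p)%N := ltnW p1.
have pJ j : pgood p (J j) by case: (hJ j).
have pJ' j : pgood p (J' j) by case: (hJ' j).
have sJ' j : size (J' j) = (d j).+1 by case: (hJ' j).
set g' := gform F' G' H' J' theta' (rX K).
have hphi : gform F G H J theta (moebius alpha beta gamma delta) - rcst lambda * g'
    = h ^+ p - h.
  by rewrite htrans addrAC subrr add0r.
have Sg' z : Scl p z g' by apply: S_gform.
have step : forall z (D : nat),
    po z (gform F G H J theta (moebius alpha beta gamma delta)) = D ->
    (0 < D)%N -> okp p D -> po z g' = D.
  move=> z D hD D0 okD.
  have [e he] := po_nat z g'.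
  have [m hm] := po_nat z h.
  have okE : okp p e by rewrite -he; exact: (S_okp p z g' p0 (Sg' z)).
  have hP : po z (gform F G H J theta (moebius alpha beta gamma delta)
                  + - (rcst lambda * g')) = (p * m)%N.
    by rewrite hphi po_AS // hm PoszM.
  have hB : po z (- (rcst lambda * g')) = e by rewrite po_opp po_scal // he.
  rewrite he; congr Posz.
  case: (ltngtP D e) => [lt|gt|->] //.
    move: hP; rewrite addrC po_addlt; last by rewrite hB hD ltz_nat.
    rewrite hB => hE; have m0 := okE _ hE; move: hE; rewrite m0 muln0 => -[e0].
    by move: lt; rewrite e0.
  move: hP; rewrite po_addlt; last by rewrite hB hD ltz_nat.
  rewrite hD => hE; have m0 := okD _ hE; move: hE; rewrite m0 muln0 => -[e0].
  by move: D0; rewrite e0.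
have d1pos : (0 < d1)%N by apply: leq_ltn_trans hd12.
have d2pos : (0 < d2)%N by apply: leq_ltn_trans hd23.
have d3pos : (0 < d3)%N by rewrite lt0n; apply: contra nH => /eqP ->; exact: dvdn0.
have okF : okp p d1 by have := okp_size p F p0 pF; rewrite sF.
have okG : okp p d2 by have := okp_size p G p0 pG; rewrite sG.
have okH : okp p d3 by have := okp_size p H p0 pH; rewrite sH.
have hfin : forall a : K, let e := po (Some a) g' in
    e = 0 \/ (a = 0 /\ e = d2) \/ (a = 1 /\ e = d3) \/ exists j, e = d j.
  move=> a; have := @po_gX_fin K n F' G' H' J' theta' a hth' inj'.
  rewrite /= sG' sH' /= => -[->|[[-> ->]|[[-> ->]|[j ej]]]].
  - by left.
  - by right; left.
  - by right; right; left.
  - by right; right; right; exists j; rewrite ej sJ'.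
have g0 : gamma = 0.
  apply/eqP; apply: contraT => hg0.
  have [M0 hM] := moeb_pole _ _ _ _ hdet hg0.
  have he := gform_pole _ _ F G H J theta _ M0 hM; rewrite sF /= in he.
  have := step _ _ he d1pos okF.
  have := hfin (- delta / gamma) => /= -[->|[[_ ->]|[[_ ->]|[j ->]]]].
  - by move=> [] e; move: d1pos; rewrite -e.
  - by move=> [] e; move: hd12; rewrite e ltnn.
  - by move=> [] e; move: (ltn_trans hd23 hd12); rewrite e ltnn.
  - by move=> [] e; move: (hdisj j) => [/eqP]; rewrite e.
subst gamma.
have ad : alpha * delta != 0 by move: hdet; rewrite mulr0 subr0.
move: ad; rewrite mulf_eq0 negb_or => /andP[al0 de0].
set a := alpha / delta; set b := beta / delta.
have a0 : a != 0 by rewrite /a mulf_neq0 // invr_eq0.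
have eM := moeb_affine alpha beta _ de0; rewrite -/a -/b in eM.
rewrite eM in step htrans hphi.
have b0 : b = 0.
  have [Ms hs] := aff_zero a b 0 a0.
  have he := gform_zero0 _ _ F G H J theta _ (fun j => proj1 (hth j)) Ms hs; rewrite sG /= in he.
  have := step _ _ he d2pos okG.
  have := hfin ((0 - b) / a) => /= -[->|[[eb ->]|[[_ ->]|[j ->]]]].
  - by move=> [] e; move: d2pos; rewrite -e.
  - move=> _; move/eqP: eb; rewrite mulf_eq0 invr_eq0 (negbTE a0) orbF sub0r oppr_eq0.
    by move/eqP.
  - by move=> [] e; move: hd23; rewrite e ltnn.
  - by move=> [] e; move: (hdisj j) => [_ /eqP]; rewrite e.
have a1 : a = 1.
  have [Ms hs] := aff_zero a b 1 a0.
  have he := gform_zero1 _ _ F G H J theta _ (fun j => proj2 (hth j)) Ms hs; rewrite sH /= in he.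
  have := step _ _ he d3pos okH.
  have := hfin ((1 - b) / a) => /= -[->|[[_ ->]|[[ea ->]|[j ->]]]].
  - by move=> [] e; move: d3pos; rewrite -e.
  - by move=> [] e; move: hd23; rewrite e ltnn.
  - move=> _; move/eqP: ea; rewrite b0 subr0 mul1r invr_eq1; by move/eqP.
  - by move=> [] e; move: (hdisj j) => [_ _ /eqP]; rewrite e.
have eX : rcst a * rX K + rcst b = rX K by rewrite a1 b0 rcst1 rcst0 mul1r addr0.
split; first by rewrite eM eX.
rewrite eX in hphi.
set g := gform F G H J theta (rX K) in hphi.
have hz : forall z, po z h = 0.
  move=> z; have [m hm] := po_nat z h.
  have S1 : Scl p z (g + rcst (- lambda) * g').
    by apply: S_add; [apply: S_gform | apply: S_scal].
  have := S_okp p z _ p0 S1.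
  rewrite rcstN mulNr hphi po_AS // hm -PoszM => ok.
  by rewrite (ok m erefl).
have [c ec] := nopole_const _ _ hz.
rewrite ec in hphi.
have [R [hR eR]] := gform_inf n F G H J theta (pG 0%N (dvdn0 p)) (pH 0%N (dvdn0 p))
  (fun j => pJ j 0%N (dvdn0 p)).
have [R' [hR' eR']] := gform_inf n F' G' H' J' theta' (pG' 0%N (dvdn0 p))
  (pH' 0%N (dvdn0 p)) (fun j => pJ' j 0%N (dvdn0 p)).
rewrite /g /g' eR eR' in hphi.
set Q := F - lambda%:P * F' - ((c ^+ p)%:P - c%:P).
have eQ : rpoly Q = rcst lambda * R' - R.
  rewrite /Q !rpolyB rpolyM -/(rcst lambda) -/(rcst (c ^+ p)) -/(rcst c) rcstX.
  rewrite -hphi; ring.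
have vQ : vge None 1 (rpoly Q).
  rewrite eQ; apply: vgeD; last exact: vgeN.
  rewrite -[1 : int]add0r; apply: vgeM; [exact: vge_rcst | exact: hR'].
have Q0 : Q = 0.
  apply/eqP; apply: contraT => Q0.
  case: vQ => [e|hv]; first by move: Q0; rewrite -rpoly_eq0 e eqxx.
  move: hv; rewrite nu_rpoly //=; move: (size Q).-1 => k; lia.
have c0 : c ^+ p - c = 0.
  have := congr1 (fun P : {poly K} => P`_0) Q0.
  rewrite /Q !coefB coefCM !coefC /= pF ?dvdn0 // pF' ?dvdn0 // mulr0 !sub0r.
  by rewrite oppr0 sub0r => /eqP; rewrite oppr_eq0 => /eqP.
exists c; split; last exact: ec.
by apply/eqP; rewrite -subr_eq0 c0.
Qed.
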